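(* Let $d\ge2$, $D\in\mathbb{C}[t]$ squarefree of degree $2d$, $(A,B)$ a solution of degree $n$ of $A^2-DB^2=1$, and $(\sigma_0,\sigma_\infty,\sigma_1,\tau_1,\dots,\tau_k)$ a monodromy tuple of $\phi_A=A^2$ labelled so that $\sigma_\infty=(2n,2n-1,\dots,1)$ and $2n$ is fixed by $\sigma_1$ and by every $\tau_i$. Let $m\mid n$ with $n/m\ge d$, let $F_h=\{j\in\{1,\dots,2n\}: j\equiv h \bmod 2m\}$ ($h=1,\dots,2m$) and $E_h=\{j: j\equiv h\bmod m\}=F_h\cup F_{m+h}$ ($h=1,\dots,m$). Suppose $G_A$ preserves the partition $\{F_1,\dots,F_{2m}\}$. Then $G_A$ also preserves $\{E_1,\dots,E_m\}$, and: $\sigma_\infty(F_1)=F_{2m}$, $\sigma_\infty(F_i)=F_{i-1}$ for $2\le i\le 2m$; $\sigma_1(F_{2m})=F_{2m}$, $\sigma_1(F_i)=F_{2m-i}$ for $1\le i\le 2m-1$; $\sigma_0(F_i)=F_{2m-i+1}$ for $1\le i\le2m$; $\tau_j(F_i)=F_i$ for all $i,j$. Likewise $\sigma_\infty(E_1)=E_m$, $\sigma_\infty(E_i)=E_{i-1}$ ($2\le i\le m$); $\sigma_1(E_m)=E_m$, $\sigma_1(E_i)=E_{m-i}$ ($1\le i\le m-1$); $\sigma_0(E_i)=E_{m-i+1}$ ($1\le i\le m$); $\tau_j(E_i)=E_i$ for all $i,j$. In particular the set of indices fixed by $\sigma_1$ is contained in $E_m$.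
   Context: Permutation products are read left to right ($\sigma\sigma'$ means first $\sigma$, then $\sigma'$). Monodromy tuple: $\phi_A=A^2:\mathbb{P}^1(\mathbb{C})\to\mathbb{P}^1(\mathbb{C})$ has degree $2n$, is totally ramified over $\infty$, and its finite branch points lie in $\{0,1,b_1,\dots,b_k\}$ with $0\le k\le d-1$. Choosing a base point, a labelling $\{1,\dots,2n\}$ of its fibre, and loops around $0,\infty,1,b_1,\dots,b_k$ generating the fundamental group with product relation $[\gamma_0][\gamma_\infty][\gamma_1][\delta_1]\cdots[\delta_k]=1$, one gets permutations $\sigma_0,\sigma_\infty,\sigma_1,\tau_1,\dots,\tau_k\in S_{2n}$ with $\sigma_0\sigma_\infty\sigma_1\tau_1\cdots\tau_k=\mathrm{id}$, where $\sigma_\infty$ is a $2n$-cycle, $\sigma_0$ has only cycles of even length, $\sigma_1$ fixes exactly $2d$ indices and its other cycles have even length, and the sum of (length$-1$) over all cycles of all $\tau_i$ is at most $d-1$ (so each $\tau_i$ moves at most $2(d-1)$ indices). The tuple is determined up to simultaneous conjugation, and such a labelling always exists. $G_A=\langle\sigma_0,\sigma_\infty,\sigma_1,\tau_1,\dots,\tau_k\rangle\le S_{2n}$ is the monodromy group. A group preserves a partition if each element maps blocks onto blocks. *)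

(* Defs.v *)
From mathcomp Require Import all_boot all_fingroup.
Set Implicit Arguments. Unset Strict Implicit. Unset Printing Implicit Defensive.
Local Open Scope group_scope.

(* Convention: the label j in {1,...,2n} is represented by the ordinal
   j-1 : 'I_(n.*2).  Permutation products are read left to right, which
   is exactly mathcomp's convention: (s * t) x = t (s x). *)

Definition ind (T : finType) (s : {perm T}) : nat :=
  \sum_(c in porbits s) (#|c| - 1).

Definition pell_monodromy_tuple (n d : nat)
    (s0 sinf s1 : {perm 'I_(n.*2)}) (k : nat) (tau : 'I_k -> {perm 'I_(n.*2)}) :
    Prop :=
  k <= d - 1 /\
      s0 * sinf * s1 * (\prod_(i < k) tau i) = 1 /\
      [exists x, porbit sinf x == [set: 'I_(n.*2)]] /\
      (forall x, ~~ odd #|porbit s0 x|) /\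
      (#|[set x | s1 x == x]| = d.*2 /\ (forall x, s1 x != x -> ~~ odd #|porbit s1 x|)) /\
      \sum_(i < k) ind (tau i) <= d - 1 /\
      (* Riemann-Hurwitz for a degree-2n cover P^1 -> P^1 (genus 0) *)
      ind s0 + ind sinf + ind s1 + \sum_(i < k) ind (tau i) = (n.*2).*2 - 2.

Definition mono_group (N : nat) (s0 sinf s1 : {perm 'I_N}) (k : nat)
    (tau : 'I_k -> {perm 'I_N}) : {set {perm 'I_N}} :=
  <<[set s0; sinf; s1] :|: [set tau i | i : 'I_k]>>.

Definition preserves_partition (T : finType) (G : {set {perm T}})
    (P : {set {set T}}) : Prop :=
  forall g, g \in G -> forall B, B \in P -> g @: B \in P.

Definition Fblk (N m h : nat) : {set 'I_N} := [set i : 'I_N | i.+1 == h %[mod m.*2]].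
Definition Eblk (N m h : nat) : {set 'I_N} := [set i : 'I_N | i.+1 == h %[mod m]].

Definition Fpart (N m : nat) : {set {set 'I_N}} := [set Fblk N m h.+1 | h : 'I_(m.*2)].
Definition Epart (N m : nat) : {set {set 'I_N}} := [set Eblk N m h.+1 | h : 'I_m].

Arguments pell_monodromy_tuple : clear implicits.

(* Main.v *)
From mathcomp Require Import all_boot all_order all_fingroup all_algebra.
From mathcomp Require Import lra zify.
Set Implicit Arguments. Unset Strict Implicit. Unset Printing Implicit Defensive.
Import Order.TTheory GRing.Theory Num.Theory.
Require Import Defs.
Local Open Scope ring_scope.

Definition cq (T : finType) (s : {perm T}) : rat :=
  \sum_x (#|porbit s x|%:R)^-1.

Lemma ind_cq (T : finType) (s : {perm T}) :
  ((ind s)%:R : rat) = #|T|%:R - cq s.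
Proof.
rewrite /ind /cq natr_sum.
have -> : (#|T|%:R : rat) = \sum_(x : T) 1.
  by rewrite sumr_const cardE /= -cardE.
rewrite -sumrB (partition_big_imset (porbit s)) /=.
apply: eq_bigr => c /imsetP [y _ ->].
rewrite (eq_bigr (fun _ => 1 - (#|porbit s y|%:R)^-1)); last first.
  by move=> x /eqP ->.
rewrite sumr_const.
have -> : #|[pred i | (i \in T) && (porbit s i == porbit s y)]| = #|porbit s y|.
  by apply: eq_card => x; rewrite !inE eq_porbit_mem.
have hn := card_porbit_neq0 s y.
rewrite -[RHS]mulr_natr mulrBl mul1r mulVf ?pnatr_eq0 // natrB ?lt0n //.
Qed.
Section Orb.
Variables (T : finType) (s : {perm T}).
Local Notation o x := #|porbit s x|.

Lemma orb_iter x : iter (o x) s x = x.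
Proof. exact: iter_porbit. Qed.

Lemma orb_fix x : s x = x -> o x = 1%N.
Proof.
move=> sx; have := uniq_traject_porbit s x.
have := card_porbit_neq0 s x.
case: (o x) => [|[|k]] //= _.
by rewrite sx inE eqxx.
Qed.

Lemma orb_ge2 x : s x != x -> (2 <= o x)%N.
Proof.
move=> sx; have := card_porbit_neq0 s x; case E: (o x) => [|[|k]] //= _.
by have := orb_iter x; rewrite E /= => h; rewrite h eqxx in sx.
Qed.

Lemma orb_ne2 x : s (s x) != x -> o x <> 2%N.
Proof. by move=> h E; have := orb_iter x; rewrite E /= => h'; rewrite h' eqxx in h. Qed.

Lemma orb_4 x : o x = 4%N -> s (s (s (s x))) = x.
Proof. by move=> E; have := orb_iter x; rewrite E. Qed.
End Orb.

Lemma invr_nat_le (a c : nat) : (0 < c)%N -> (c <= a)%N -> ((a%:R : rat)^-1 <= (c%:R)^-1).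
Proof.
move=> c0 ca; rewrite lef_pV2 ?ler_nat // posrE ltr0n //; lia.
Qed.
Definition defic (T : finType) (s : {perm T}) : rat :=
  \sum_(x | s x != x) (2^-1 - (#|porbit s x|%:R)^-1).

Lemma defic_ge0 (T : finType) (s : {perm T}) : 0 <= defic s.
Proof.
apply: sumr_ge0 => x sx; rewrite subr_ge0.
by have := invr_nat_le (isT : (0 < 2)%N) (orb_ge2 sx).
Qed.

Lemma sum_ge_card (T : finType) (S : {set T}) (f : T -> rat) (c : rat) :
  (forall x, x \in S -> c <= f x) -> c *+ #|S| <= \sum_(x in S) f x.
Proof.
move=> h; rewrite -sumr_const; exact: ler_sum.
Qed.

Lemma defic_big (T : finType) (r : T -> nat) (b : nat) (s : {perm T})
  (Hcnt : forall xs : seq T, uniq (map r xs) ->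
            (b * size xs <= #|[set y | r y \in map r xs]|)%N)
  (Hs : forall x y, r x = r y -> r (s x) = r (s y))
  (Hsi : forall x y, r (s x) = r (s y) -> r x = r y)
  (Hev : forall x, s x != x -> ~~ odd #|porbit s x|) :
  (exists x, r (s (s x)) != r x) -> b%:R <= defic s.
Proof.
move=> [x0 hx0].
pose S := [set y | r (s (s y)) != r y].
pose f x := ((2:rat)^-1 - (#|porbit s x|%:R)^-1).
have Sfix : forall y, y \in S -> s y != y.
  by move=> y; rewrite inE; apply: contra => /eqP sy; rewrite sy sy.
have Sclos : forall y z, y \in S -> r z = r y -> z \in S.
  by move=> y z; rewrite !inE => h e; rewrite (Hs _ _ (Hs _ _ e)) e.
have n01 : forall y, y \in S -> r (s y) != r y.
  move=> y; rewrite inE; apply: contra => /eqP e.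
  by rewrite (Hs _ _ e) e.
have n12 : forall y, y \in S -> r (s (s y)) != r (s y).
  move=> y /n01; apply: contra => /eqP e; apply/eqP; exact: Hsi.
have Ss : forall y, y \in S -> s y \in S.
  move=> y yS; rewrite inE; move: yS; rewrite inE; apply: contra => /eqP e.
  apply/eqP; exact: Hsi.
have o4 : forall y, y \in S -> (4 <= #|porbit s y|)%N.
  move=> y yS; have h2 := orb_ge2 (Sfix y yS).
  have ev := Hev _ (Sfix y yS).
  have h3 : #|porbit s y| <> 2%N.
    apply: orb_ne2; move: yS; rewrite inE; apply: contra => /eqP ->; by [].
  have h4 : #|porbit s y| <> 3%N by move=> E; rewrite E in ev.
  lia.
have Df : \sum_(x in S) f x <= defic s.
  rewrite /defic big_mkcond [X in _ <= X]big_mkcond /=.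
  apply: ler_sum => x _.
  case: ifP => xS; first by rewrite (Sfix x xS).
  case: ifP => // sx; rewrite /f subr_ge0.
  by have := invr_nat_le (isT : (0 < 2)%N) (orb_ge2 sx).
apply: le_trans Df.
case: (boolP [exists y in S, #|porbit s y| == 4%N]).
  move=> /existsP [y /andP [yS /eqP oy]].
  have y4 := orb_4 oy.
  have n03 : r (s (s (s y))) != r y.
    apply/negP => /eqP e; have := Hs _ _ e; rewrite y4 => e'.
    by move: (n01 y yS); rewrite e' eqxx.
  have n13 : r (s (s (s y))) != r (s y).
    apply/negP => /eqP e; have := Hsi _ _ e => e'.
    by move: yS; rewrite inE e' eqxx.
  have n23 : r (s (s (s y))) != r (s (s y)).
    apply/negP => /eqP e; have := Hsi _ _ e => e'.
    by move: (n12 y yS); rewrite e' eqxx.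
  have h01 := n01 y yS; have h12 := n12 y yS; have h02 : r (s (s y)) != r y by move: yS; rewrite inE.
  have U : uniq [seq r i | i <- [:: y; s y; s (s y); s (s (s y))]].
    rewrite /= !inE !negb_or; repeat (apply/andP; split).
    all: try done.
    all: try (rewrite eq_sym; done).
  have := Hcnt _ U; rewrite /= => hc.
  have sub : [set y0 | r y0 \in [:: r y; r (s y); r (s (s y)); r (s (s (s y)))]] \subset S.
    apply/subsetP => z H; rewrite !inE in H; move: H => /or4P [] /eqP e.
    - exact: Sclos yS e.
    - exact: Sclos (Ss _ yS) e.
    - exact: Sclos (Ss _ (Ss _ yS)) e.
    - exact: Sclos (Ss _ (Ss _ (Ss _ yS))) e.
  have cS := leq_trans hc (subset_leq_card sub).
  apply: le_trans (sum_ge_card (c := 4^-1) _).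
    rewrite -mulr_natr; have : ((b*4)%:R <= #|S|%:R :> rat) by rewrite ler_nat.
    rewrite natrM; lra.
  move=> x xS; rewrite /f.
  have := invr_nat_le (isT : (0 < 4)%N) (o4 x xS).
  lra.
move=> /existsPn no4.
have x0S : x0 \in S by rewrite inE.
have h01 := n01 x0 x0S; have h12 := n12 x0 x0S.
have U : uniq [seq r i | i <- [:: x0; s x0; s (s x0)]].
  rewrite /= !inE !negb_or; repeat (apply/andP; split).
  all: try done.
  all: try (rewrite eq_sym; done).
have := Hcnt _ U; rewrite /= => hc.
have sub : [set y0 | r y0 \in [:: r x0; r (s x0); r (s (s x0))]] \subset S.
  apply/subsetP => z H; rewrite !inE in H; move: H => /or3P [] /eqP e.
  - exact: Sclos x0S e.
  - exact: Sclos (Ss _ x0S) e.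
  - exact: Sclos (Ss _ (Ss _ x0S)) e.
have cS := leq_trans hc (subset_leq_card sub).
apply: le_trans (sum_ge_card (c := 3^-1) _).
  rewrite -mulr_natr; have : ((b*3)%:R <= #|S|%:R :> rat) by rewrite ler_nat.
  rewrite natrM; lra.
move=> x xS; rewrite /f.
have o6 : (6 <= #|porbit s x|)%N.
  have := o4 x xS; have := no4 x; rewrite xS /= => n4.
  have ev := Hev _ (Sfix x xS).
  have h5 : #|porbit s x| <> 5%N by move=> E; rewrite E in ev.
  move/eqP: n4 => n4; lia.
have := invr_nat_le (isT : (0 < 6)%N) o6.
lra.
Qed.

Lemma cq_split (T : finType) (s : {perm T}) :
  cq s + defic s =
  (#|[set x | s x == x]|%:R : rat) + (#|T|%:R - #|[set x | s x == x]|%:R) / 2.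
Proof.
rewrite /cq /defic (bigID (fun x => s x == x)) /=.
rewrite (eq_bigr (fun _ => 1)); last by move=> x /eqP /orb_fix ->; rewrite invr1.
rewrite sumr_const -addrA; congr (_ + _).
  by apply: f_equal; apply: eq_card => x; rewrite inE.
rewrite -big_split /=.
rewrite (eq_bigr (fun _ => 2^-1)); last by move=> x _; rewrite addrC subrK.
rewrite sumr_const.
have -> : #|[set x | s x == x]| = #|[pred x | s x == x]| by apply: eq_card => x; rewrite inE.
have := cardC [pred x | s x == x].
have -> : #|[pred i | s i != i]| = #|[predC [pred x | s x == x]]| by apply: eq_card.
move=> <-; rewrite natrD -mulr_natl; lra.
Qed.

Lemma cnt1 (N M b rho : nat) : N = (M * b)%N -> (rho < M)%N ->
  (b <= #|[set y : 'I_N | (y %% M == rho)%N]|)%N.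
Proof.
move=> NMb rM.
case: b NMb => [|b'] NMb; first by [].
have N0 : (0 < N)%N by rewrite NMb muln_gt0; apply/andP; split => //; lia.
pose y0 : 'I_N := Ordinal N0.
pose f (j : 'I_b'.+1) : 'I_N := insubd y0 (rho + j * M)%N.
have lt : forall j : 'I_b'.+1, (rho + j * M < N)%N.
  move=> j; have := ltn_ord j; rewrite NMb; nia.
have vf : forall j, val (f j) = (rho + j * M)%N.
  by move=> j; rewrite /f val_insubd lt.
have -> : b'.+1 = #|f @: [set: 'I_b'.+1]|.
  rewrite card_in_imset ?cardsT ?card_ord //.
  move=> i j _ _ /(congr1 val); rewrite !vf => /eqP.
  rewrite eqn_add2l eqn_pmul2r; last by lia.
  by move=> /eqP /val_inj.
apply: subset_leq_card; apply/subsetP => y /imsetP [j _ ->].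
by rewrite inE vf addnC modnMDl modn_small.
Qed.

Lemma cnt_res (N M b : nat) (rs : seq nat) : N = (M * b)%N -> uniq rs ->
  all (fun rho => rho < M)%N rs ->
  (b * size rs <= #|[set y : 'I_N | (y %% M)%N \in rs]|)%N.
Proof.
move=> NMb; elim: rs => [|rho rs IH] /=; first by rewrite muln0.
move=> /andP [nin u] /andP [lt al].
have -> : [set y : 'I_N | (y %% M)%N \in rho :: rs] =
   [set y : 'I_N | (y %% M == rho)%N] :|: [set y : 'I_N | (y %% M)%N \in rs].
  by apply/setP => y; rewrite !inE.
rewrite cardsU.
have -> : [set y : 'I_N | (y %% M == rho)%N] :&: [set y : 'I_N | (y %% M)%N \in rs] = set0.
  apply/setP => y; rewrite !inE; apply/negbTE; apply/negP => /andP [/eqP e h].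
  by rewrite -e h in nin.
rewrite cards0 subn0 mulnS; apply: leq_add; first exact: cnt1.
exact: IH.
Qed.

Local Close Scope ring_scope.
Local Open Scope group_scope.

Lemma modD_congr (a a' b b' M : nat) : (a %% M = a' %% M)%N -> (b %% M = b' %% M)%N ->
  ((a + b) %% M = (a' + b') %% M)%N.
Proof. by move=> ha hb; rewrite -modnDm ha hb modnDm. Qed.

Lemma arith1 (a c : nat) : ((a + 1) + (c + 2) = a + 2 + (c + 1))%N.
Proof. lia. Qed.

Lemma modm_split u m : 0 < m -> u < m.*2 -> u %% m = if u < m then u else u - m.
Proof.
move=> m0 um; case: ltnP => h; first by rewrite modn_small.
rewrite -{1}(subnKC h) modnDl modn_small //; lia.
Qed.
Lemma modm2 v m : 0 < m -> v < m.*2 -> (m + v) %% m.*2 = if v < m then m + v else v - m.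
Proof.
move=> m0 vm; case: ltnP => h; first by rewrite modn_small //; lia.
have -> : m + v = m.*2 + (v - m) by lia.
rewrite modnDl modn_small //; lia.
Qed.
Lemma EFmod a h m : 0 < m ->
  (a %% m == h %% m) = (a %% m.*2 == h %% m.*2) || (a %% m.*2 == (m + h) %% m.*2).
Proof.
move=> m0.
have d2 : m %| m.*2 by rewrite -muln2 dvdn_mulr.
rewrite -(modn_dvdm a d2) -(modn_dvdm h d2) -(modnDmr m h).
have : a %% m.*2 < m.*2 by rewrite ltn_pmod // double_gt0.
have : h %% m.*2 < m.*2 by rewrite ltn_pmod // double_gt0.
move: (a %% m.*2) (h %% m.*2) => u v hv hu.
rewrite (@modm_split u m m0 hu) (@modm_split v m m0 hv) (@modm2 v m m0 hv).
case: (ltnP u m); case: (ltnP v m); move=> *; lia.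
Qed.

Lemma modcan (a c k M : nat) : ((a + k) %% M = (c + k) %% M)%N -> (a %% M = c %% M)%N.
Proof. by move/eqP; rewrite eqn_modDr => /eqP. Qed.

Lemma mod0_cases v D : 0 < D -> v <= D.*2 -> v %% D = 0 -> [\/ v = 0, v = D | v = D.*2].
Proof.
move=> D0 vD; case: (ltngtP v D) => h.
- by rewrite modn_small // => ->; constructor 1.
- have -> : v = D + (v - D) by lia.
  rewrite modnDl; case: (ltngtP (v - D) D) => h2.
  + by rewrite modn_small // => e; lia.
  + lia.
  + by move=> _; constructor 3; lia.
- by move=> _; constructor 2.
Qed.
Lemma fixres u m : 0 < m -> u < m.*2 -> (u + u + 2) %% m.*2 = 0 -> u = m.-1 \/ u = (m.*2).-1.
Proof.
move=> m0 um h; have := @mod0_cases (u + u + 2) m.*2; rewrite h.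
case; [lia | lia | done | lia | lia | lia].
Qed.

Lemma finish (n : nat) (s0 sinf s1 : {perm 'I_(n.*2)}) (k : nat)
    (tau : 'I_k -> {perm 'I_(n.*2)}) (m : nat) :
  (0 < m)%N -> (m.*2 <= n.*2)%N ->
  preserves_partition (mono_group s0 sinf s1 tau) (Fpart (n.*2) m) ->
  (forall x : 'I_(n.*2), ((sinf x %% m.*2 + 1) %% m.*2 = x %% m.*2)%N) ->
  (forall x : 'I_(n.*2), ((s1 x %% m.*2 + x %% m.*2 + 2) %% m.*2 = 0)%N) ->
  (forall x : 'I_(n.*2), ((s0 x %% m.*2 + x %% m.*2 + 1) %% m.*2 = 0)%N) ->
  (forall j (x : 'I_(n.*2)), (tau j x %% m.*2 = x %% m.*2)%N) ->

  preserves_partition (mono_group s0 sinf s1 tau) (Epart (n.*2) m)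
  /\ (sinf @: Fblk (n.*2) m 1 = Fblk (n.*2) m m.*2 /\
        (forall i, (2 <= i <= m.*2)%N -> sinf @: Fblk (n.*2) m i = Fblk (n.*2) m i.-1) /\
        s1 @: Fblk (n.*2) m m.*2 = Fblk (n.*2) m m.*2 /\
        (forall i, (1 <= i <= m.*2 - 1)%N -> s1 @: Fblk (n.*2) m i = Fblk (n.*2) m (m.*2 - i)) /\
        (forall i, (1 <= i <= m.*2)%N -> s0 @: Fblk (n.*2) m i = Fblk (n.*2) m (m.*2 - i + 1)) /\
        (forall j i, (1 <= i <= m.*2)%N -> tau j @: Fblk (n.*2) m i = Fblk (n.*2) m i))
  /\ (sinf @: Eblk (n.*2) m 1 = Eblk (n.*2) m m /\
        (forall i, (2 <= i <= m)%N -> sinf @: Eblk (n.*2) m i = Eblk (n.*2) m i.-1) /\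
        s1 @: Eblk (n.*2) m m = Eblk (n.*2) m m /\
        (forall i, (1 <= i <= m - 1)%N -> s1 @: Eblk (n.*2) m i = Eblk (n.*2) m (m - i)) /\
        (forall i, (1 <= i <= m)%N -> s0 @: Eblk (n.*2) m i = Eblk (n.*2) m (m - i + 1)) /\
        (forall j i, (1 <= i <= m)%N -> tau j @: Eblk (n.*2) m i = Eblk (n.*2) m i))
  /\ (forall x, s1 x = x -> x \in Eblk (n.*2) m m).
Proof.
move=> m0 MN pres sinfS phi0 psi0 tfix.
move: pres; set G := mono_group s0 sinf s1 tau => pres.
set M := m.*2 in MN sinfS phi0 psi0 tfix *.
have M0 : (0 < M)%N by rewrite /M; lia.
have G0 : s0 \in G by apply: mem_gen; rewrite !inE eqxx.
have Ginf : sinf \in G by apply: mem_gen; rewrite !inE eqxx orbT.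
have G1 : s1 \in G by apply: mem_gen; rewrite !inE eqxx !orbT.
have Gt : forall j, tau j \in G.
  by move=> j; apply: mem_gen; rewrite !inE; apply/orP; right; apply: imset_f.
pose r (x : 'I_(n.*2)) := (x %% M)%N.
have inF : forall x h, (0 < h)%N -> (x \in Fblk (n.*2) m h) = (r x == h.-1 %% M)%N.
  move=> x h h0; rewrite /Fblk inE /r -{1}(prednK h0) -[x.+1]addn1 -[h.-1.+1]addn1 eqn_modDr //.
have Himg : forall g h h', g \in G -> (0 < h <= M)%N -> (0 < h')%N ->
    forall x, x \in Fblk (n.*2) m h -> g x \in Fblk (n.*2) m h' ->
    g @: Fblk (n.*2) m h = Fblk (n.*2) m h'.
  move=> g h h' gG /andP [h0 hM] h'0 x xh gxh.
  have hF : Fblk (n.*2) m h \in Fpart (n.*2) m.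
    have hlt : (h.-1 < M)%N by rewrite prednK.
    by apply/imsetP; exists (Ordinal hlt) => //=; rewrite prednK.
  have := pres g gG _ hF => /imsetP [j _ E]; rewrite E.
  have gxj : g x \in Fblk (n.*2) m j.+1 by rewrite -E; apply: imset_f.
  apply/setP => y; move: gxj gxh; rewrite /Fblk !inE => /eqP a /eqP c.
  by rewrite -a c.
have tgt : forall (g : {perm 'I_(n.*2)}) (x : 'I_(n.*2)) (h' c : nat), (0 < h')%N ->
    ((r (g x) + c) %% M = (h'.-1 + c) %% M)%N -> g x \in Fblk (n.*2) m h'.
  move=> g x hh c h0 e; by rewrite inF // -(modcan e) /r modn_mod.
have wit : forall h, (0 < h <= M)%N -> exists2 x : 'I_(n.*2), r x = h.-1 & x \in Fblk (n.*2) m h.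
  move=> h /andP [h0 hM]; have hlt : (h.-1 < n.*2)%N by lia.
  exists (Ordinal hlt); first by rewrite /r /= modn_small //; lia.
  by rewrite inF // /r /= modn_small //; lia.
have F1 : sinf @: Fblk (n.*2) m 1 = Fblk (n.*2) m M.
  have h1 : (0 < 1 <= M)%N by rewrite M0.
  have [x rx xin] := wit 1%N h1.
  apply: (Himg _ _ _ Ginf h1 M0 x xin); apply: (tgt _ _ _ 1%N M0).
  by rewrite [(M.-1 + 1)%N]addn1 prednK // modnn; rewrite [LHS]sinfS; rewrite -/(r x) rx.
have F2 : forall i, (2 <= i <= M)%N -> sinf @: Fblk (n.*2) m i = Fblk (n.*2) m i.-1.
  move=> i /andP [i2 iM]; have hi : (0 < i <= M)%N by rewrite iM; lia.
  have [x rx xin] := wit i hi.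
  have ip : (0 < i.-1)%N by lia.
  apply: (Himg _ _ _ Ginf hi ip x xin); apply: (tgt _ _ _ 1%N ip).
  rewrite [(i.-1.-1 + 1)%N]addn1 prednK // [LHS]sinfS -/(r x) rx modn_small //; lia.
have F3 : s1 @: Fblk (n.*2) m M = Fblk (n.*2) m M.
  have hi : (0 < M <= M)%N by rewrite M0 leqnn.
  have [x rx xin] := wit M hi.
  apply: (Himg _ _ _ G1 hi M0 x xin); apply: (tgt _ _ _ (M.-1 + 2)%N M0).
  have -> : (M.-1 + (M.-1 + 2) = 2 * M)%N by lia.
  by rewrite modnMl -rx addnA; apply: phi0.
have F4 : forall i, (1 <= i <= M - 1)%N -> s1 @: Fblk (n.*2) m i = Fblk (n.*2) m (M - i).
  move=> i /andP [i1 iM]; have hi : (0 < i <= M)%N by lia.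
  have [x rx xin] := wit i hi.
  have ip : (0 < M - i)%N by lia.
  apply: (Himg _ _ _ G1 hi ip x xin); apply: (tgt _ _ _ (i.-1 + 2)%N ip).
  have -> : ((M - i).-1 + (i.-1 + 2) = M)%N by lia.
  by rewrite modnn -rx addnA; apply: phi0.
have F5 : forall i, (1 <= i <= M)%N -> s0 @: Fblk (n.*2) m i = Fblk (n.*2) m (M - i + 1).
  move=> i hi; have [x rx xin] := wit i hi.
  have ip : (0 < M - i + 1)%N by lia.
  apply: (Himg _ _ _ G0 hi ip x xin); apply: (tgt _ _ _ (i.-1 + 1)%N ip).
  have -> : ((M - i + 1).-1 + (i.-1 + 1) = M)%N by case/andP: hi => *; lia.
  by rewrite modnn -rx addnA; apply: psi0.
have F6 : forall j i, (1 <= i <= M)%N -> tau j @: Fblk (n.*2) m i = Fblk (n.*2) m i.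
  move=> j i hi; have [x rx xin] := wit i hi.
  have ip : (0 < i)%N by case/andP: hi.
  apply: (Himg _ _ _ (Gt j) hi ip x xin); apply: (tgt _ _ _ 0%N ip).
  by rewrite [r _]tfix -/(r x) rx.
have EF : forall h, Eblk (n.*2) m h = Fblk (n.*2) m h :|: Fblk (n.*2) m (m + h).
  by move=> h; apply/setP => y; rewrite /Eblk /Fblk !inE; apply: EFmod.
have MM : M = (m + m)%N by rewrite /M addnn.
have E1 : sinf @: Eblk (n.*2) m 1 = Eblk (n.*2) m m.
  rewrite !EF imsetU F1 F2; last by rewrite /M; lia.
  by rewrite -MM addn1 /= setUC.
have E2 : forall i, (2 <= i <= m)%N -> sinf @: Eblk (n.*2) m i = Eblk (n.*2) m i.-1.
  move=> i hi; rewrite !EF imsetU !F2; last 2 first.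
  - by rewrite /M; lia.
  - by rewrite /M; lia.
  by have -> : ((m + i).-1 = m + i.-1)%N by lia.
have E3 : s1 @: Eblk (n.*2) m m = Eblk (n.*2) m m.
  rewrite !EF imsetU -MM F3 F4; last by rewrite /M; lia.
  by have -> : (M - m = m)%N by rewrite /M; lia.
have E4 : forall i, (1 <= i <= m - 1)%N -> s1 @: Eblk (n.*2) m i = Eblk (n.*2) m (m - i).
  move=> i hi; rewrite !EF imsetU !F4; last 2 first.
  - by rewrite /M; lia.
  - by rewrite /M; lia.
  have -> : (M - (m + i) = m - i)%N by rewrite /M; lia.
  have -> : (M - i = m + (m - i))%N by rewrite /M; lia.
  by rewrite setUC.
have E5 : forall i, (1 <= i <= m)%N -> s0 @: Eblk (n.*2) m i = Eblk (n.*2) m (m - i + 1).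
  move=> i hi; rewrite !EF imsetU !F5; last 2 first.
  - by rewrite /M; lia.
  - by rewrite /M; lia.
  have -> : (M - (m + i) + 1 = m - i + 1)%N by rewrite /M; lia.
  have -> : (M - i + 1 = m + (m - i + 1))%N by rewrite /M; lia.
  by rewrite setUC.
have E6 : forall j i, (1 <= i <= m)%N -> tau j @: Eblk (n.*2) m i = Eblk (n.*2) m i.
  move=> j i hi; rewrite !EF imsetU !F6 //; rewrite /M; lia.
have Emem : forall i, (1 <= i <= m)%N -> Eblk (n.*2) m i \in Epart (n.*2) m.
  move=> i hi; have hlt : (i.-1 < m)%N by lia.
  by apply/imsetP; exists (Ordinal hlt) => //=; rewrite prednK //; lia.
pose H := [set g : {perm 'I_(n.*2)} | [forall B, (B \in Epart (n.*2) m) ==> (g @: B \in Epart (n.*2) m)]].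
have Hg : group_set H.
  apply/group_setP; split.
    rewrite /H inE; apply/forallP => B; apply/implyP => BE.
    have -> : (1 : {perm 'I_(n.*2)}) @: B = B.
      by rewrite (eq_imset _ (perm1 (T := 'I_(n.*2)))) imset_id.
    done.
  move=> g h; rewrite /H !inE => /forallP Hg1 /forallP Hh1.
  apply/forallP => B; apply/implyP => BE.
  have -> : (g * h) @: B = h @: (g @: B).
    by rewrite -imset_comp; apply: eq_imset => y; rewrite permM.
  by have := implyP (Hh1 _) (implyP (Hg1 B) BE).
have gensH : [set s0; sinf; s1] :|: [set tau i | i : 'I_k] \subset H.
  apply/subsetP => g; rewrite !inE => /orP [/orP [/orP [] |] |] .
  - move=> /eqP ->; rewrite /H ?inE; apply/forallP => B; apply/implyP => /imsetP [j _ ->]; have jm := ltn_ord j.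
    rewrite E5 ?Emem //; lia.
  - move=> /eqP ->; rewrite /H ?inE; apply/forallP => B; apply/implyP => /imsetP [j _ ->]; have jm := ltn_ord j.
    case: (posnP j) => [j0|jp].
      by rewrite j0 E1 Emem //; lia.
    by rewrite E2 ?Emem //= ; lia.
  - move=> /eqP ->; rewrite /H ?inE; apply/forallP => B; apply/implyP => /imsetP [j _ ->]; have jm := ltn_ord j.
    case: (ltnP j.+1 m) => hj.
      by rewrite E4 ?Emem //; lia.
    have -> : j.+1 = m by have := ltn_ord j; lia.
    by rewrite E3 Emem //; lia.
  - move=> /imsetP [i _ ->]; rewrite /H ?inE; apply/forallP => B; apply/implyP => /imsetP [j _ ->]; have jm := ltn_ord j.
    by rewrite E6 ?Emem //; lia.
have GH : G \subset H.
  have := @gen_subG _ ([set s0; sinf; s1] :|: [set tau i | i : 'I_k]) (Group Hg).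
  by rewrite gensH.
split.
  move=> g gG B BE; have := subsetP GH g gG; rewrite /H inE => /forallP /(_ B).
  by rewrite BE.
split.
  split; first exact: F1.
  split; first exact: F2.
  split; first exact: F3.
  split; first exact: F4.
  split; first exact: F5.
  exact: F6.
split.
  split; first exact: E1.
  split; first exact: E2.
  split; first exact: E3.
  split; first exact: E4.
  split; first exact: E5.
  exact: E6.
move=> x fx; rewrite EF !inE /r.
have := phi0 x; rewrite fx => /(@fixres _ m m0 (ltn_pmod x M0)) [] e.
  apply/orP; left; rewrite -[x.+1]addn1 -[m in (_ == m %[mod _])%N](prednK m0) -[m.-1.+1]addn1.
  by rewrite eqn_modDr -e modn_mod.
apply/orP; right; rewrite -[x.+1]addn1.
have -> : (m + m = (m.*2).-1 + 1)%N by rewrite addn1 prednK ?addnn // double_gt0.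
by rewrite eqn_modDr -e modn_mod.
Qed.

Theorem lemma7p1 (d n : nat) (s0 sinf s1 : {perm 'I_(n.*2)}) (k : nat)
    (tau : 'I_k -> {perm 'I_(n.*2)}) (m : nat) :
  (2 <= d)%N ->
  pell_monodromy_tuple n d s0 sinf s1 k tau ->
  (* labelling: sinf = (2n, 2n-1, ..., 1), i.e. j |-> j-1 and 1 |-> 2n *)
  (forall i : 'I_(n.*2), val (sinf i) = (i + (n.*2).-1) %% n.*2) ->
  (* 2n is fixed by s1 and by every tau_i *)
  (forall x : 'I_(n.*2), val x = (n.*2).-1 -> s1 x = x /\ forall j, tau j x = x) ->
  (m %| n)%N -> (d <= n %/ m)%N ->
  preserves_partition (mono_group s0 sinf s1 tau) (Fpart (n.*2) m) ->
  preserves_partition (mono_group s0 sinf s1 tau) (Epart (n.*2) m)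
  /\ (sinf @: Fblk (n.*2) m 1 = Fblk (n.*2) m m.*2 /\
        (forall i, (2 <= i <= m.*2)%N -> sinf @: Fblk (n.*2) m i = Fblk (n.*2) m i.-1) /\
        s1 @: Fblk (n.*2) m m.*2 = Fblk (n.*2) m m.*2 /\
        (forall i, (1 <= i <= m.*2 - 1)%N -> s1 @: Fblk (n.*2) m i = Fblk (n.*2) m (m.*2 - i)) /\
        (forall i, (1 <= i <= m.*2)%N -> s0 @: Fblk (n.*2) m i = Fblk (n.*2) m (m.*2 - i + 1)) /\
        (forall j i, (1 <= i <= m.*2)%N -> tau j @: Fblk (n.*2) m i = Fblk (n.*2) m i))
  /\ (sinf @: Eblk (n.*2) m 1 = Eblk (n.*2) m m /\
        (forall i, (2 <= i <= m)%N -> sinf @: Eblk (n.*2) m i = Eblk (n.*2) m i.-1) /\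
        s1 @: Eblk (n.*2) m m = Eblk (n.*2) m m /\
        (forall i, (1 <= i <= m - 1)%N -> s1 @: Eblk (n.*2) m i = Eblk (n.*2) m (m - i)) /\
        (forall i, (1 <= i <= m)%N -> s0 @: Eblk (n.*2) m i = Eblk (n.*2) m (m - i + 1)) /\
        (forall j i, (1 <= i <= m)%N -> tau j @: Eblk (n.*2) m i = Eblk (n.*2) m i))
  /\ (forall x, s1 x = x -> x \in Eblk (n.*2) m m).
Proof.
move=> d2 [kd [prod [/existsP [x0 /eqP cyc] [ev0 [[fix1 ev1] [tsum RH]]]]]] Hsinf Hfix mdn dnm pres.
move: pres; set G := mono_group s0 sinf s1 tau => pres.
have m0 : (0 < m)%N by move: dnm; case: (posnP m) => [->|//]; rewrite divn0; lia.
have b2 : (2 <= n %/ m)%N by lia.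
set M := m.*2.
set b := n %/ m in b2 dnm *.
have nbm : n = (b * m)%N by rewrite /b divnK.
have NMb : n.*2 = (M * b)%N by rewrite /M; nia.
have M0 : (0 < M)%N by rewrite /M; lia.
have MN : (M <= n.*2)%N by rewrite NMb; nia.
have G0 : s0 \in G by apply: mem_gen; rewrite !inE eqxx.
have Ginf : sinf \in G by apply: mem_gen; rewrite !inE eqxx orbT.
have G1 : s1 \in G by apply: mem_gen; rewrite !inE eqxx !orbT.
have Gt : forall j, tau j \in G.
  by move=> j; apply: mem_gen; rewrite !inE; apply/orP; right; apply: imset_f.
pose r (x : 'I_(n.*2)) := (x %% M)%N.
have inF : forall x h, (0 < h)%N -> (x \in Fblk (n.*2) m h) = (r x == h.-1 %% M)%N.
  move=> x h h0; rewrite /Fblk inE /r -{1}(prednK h0) -[x.+1]addn1 -[h.-1.+1]addn1 eqn_modDr //.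
have Fin : forall x : 'I_(n.*2), Fblk (n.*2) m (r x).+1 \in Fpart (n.*2) m.
  move=> x; apply/imsetP; exists (Ordinal (ltn_pmod x M0)) => //.
have xFin : forall x : 'I_(n.*2), x \in Fblk (n.*2) m (r x).+1.
  by move=> x; rewrite inF // /r modn_mod.
have Hpres : forall g, g \in G -> forall x y, r x = r y -> r (g x) = r (g y).
  move=> g gG x y e.
  have := pres g gG _ (Fin x) => /imsetP [j _ E].
  have gx : g x \in Fblk (n.*2) m j.+1 by rewrite -E; apply: imset_f.
  have gy : g y \in Fblk (n.*2) m j.+1 by rewrite -E; apply: imset_f; rewrite inF // e /r modn_mod.
  by move: gx gy; rewrite !inF // => /eqP -> /eqP ->.
have Hinj : forall g, g \in G -> forall x y, r (g x) = r (g y) -> r x = r y.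
  move=> g gG x y e; have := Hpres _ (groupVr gG) _ _ e; by rewrite !permK.
have Hcnt : forall xs : seq 'I_(n.*2), uniq (map r xs) ->
    (b * size xs <= #|[set y | r y \in map r xs]|)%N.
  move=> xs u; rewrite -(size_map r); apply: cnt_res => //.
  by apply/allP => z /mapP [y _ ->]; rewrite /r ltn_pmod.
have tfix : forall j x, r (tau j x) = r x.
  move=> j x; apply/eqP; apply/negPn/negP => ne.
  pose S := [set y | r y \in [:: r (tau j x); r x]].
  have cS : (b * 2 <= #|S|)%N.
    apply: (Hcnt [:: tau j x; x]); by rewrite /= inE ne.
  have mv : forall y, y \in S -> tau j y != y.
    move=> y; rewrite !inE => /orP [] /eqP e.
    - apply/negP => /eqP ty.
      have e2 : r (tau j y) = r (tau j x) by rewrite ty.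
      have e3 := Hinj _ (Gt j) _ _ e2.
      by rewrite -e e3 eqxx in ne.
    - apply/negP => /eqP ty.
      have := Hpres _ (Gt j) _ _ e; rewrite ty => e'.
      by rewrite -e' e eqxx in ne.
  have hfix : (#|[set y | tau j y == y]| + b * 2 <= n.*2)%N.
    have sub : [set y | tau j y == y] \subset ~: S.
      apply/subsetP => y; rewrite inE => /eqP ty; rewrite inE; apply/negP => yS.
      by have := mv y yS; rewrite ty eqxx.
    have := subset_leq_card sub; have := cardsC S; rewrite card_ord; move=> h1 h2; apply: leq_trans (_ : _ <= #|S| + #|~: S|) _; last by rewrite h1.
    rewrite addnC; exact: leq_add cS h2.
  have hind : (ind (tau j) <= d - 1)%N.
    by move: tsum; rewrite (bigD1 j) //=; lia.
  have hi := ind_cq (tau j); have hs := cq_split (tau j); have hd := defic_ge0 (tau j).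
  rewrite card_ord in hi hs.
  have : ((ind (tau j))%:R <= (d - 1)%:R :> rat)%R by rewrite ler_nat.
  have : ((#|[set y | tau j y == y]| + b * 2)%:R <= (n.*2)%:R :> rat)%R by rewrite ler_nat.
  have : ((d%:R <= b%:R :> rat))%R by rewrite ler_nat.
  have : ((2 <= d%:R :> rat))%R by rewrite (ler_nat _ 2).
  rewrite natrB ?natrD ?natrM; last by lia.
  lra.
have oinf : forall x, #|porbit sinf x| = n.*2.
  move=> x; have : x \in porbit sinf x0 by rewrite cyc inE.
  rewrite -eq_porbit_mem => /eqP ->; by rewrite cyc cardsT card_ord.
have N0 : (0 < n.*2)%N by lia.
have indinf : ind sinf = (n.*2).-1.
  apply/eqP; rewrite -(eqr_nat rat) ind_cq card_ord /cq.
  rewrite (eq_bigr (fun _ => ((n.*2)%:R)^-1)%R); last by move=> x _; rewrite oinf.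
  rewrite sumr_const card_ord -[X in (_ - X)%R]mulr_natr mulVf ?pnatr_eq0 -?lt0n //.
  by rewrite -subn1 natrB.
have hsum : (ind s0 + ind s1 <= (n.*2).-1)%N.
  move: RH; rewrite indinf; lia.
have fix0 : #|[set x | s0 x == x]| = 0%N.
  apply/eqP; rewrite cards_eq0; apply/eqP/setP => x; rewrite !inE.
  apply/negP => /eqP /orb_fix h; by have := ev0 x; rewrite h.
have hi0 := ind_cq s0; have hs0 := cq_split s0; have hd0 := defic_ge0 s0.
have hi1 := ind_cq s1; have hs1 := cq_split s1; have hd1 := defic_ge0 s1.
rewrite card_ord in hi0 hs0 hi1 hs1.
rewrite fix0 in hs0; rewrite fix1 in hs1.
have bd0 := defic_big Hcnt (Hpres _ G0) (Hinj _ G0) (fun x _ => ev0 x).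
have bd1 := defic_big Hcnt (Hpres _ G1) (Hinj _ G1) ev1.
have Dle : (defic s0 + defic s1 <= (d - 1)%:R)%R.
  have : ((ind s0 + ind s1)%:R <= ((n.*2).-1)%:R :> rat)%R by rewrite ler_nat.
  rewrite natrD -subn1 natrB //.
  have : ((2 <= d%:R :> rat))%R by rewrite (ler_nat _ 2).
  have e2 : ((n.*2)%:R : rat) = (n%:R * 2)%R by rewrite -muln2 natrM.
  move: hi0 hi1 hs0 hs1; rewrite !e2 -[d.*2]muln2 natrM natrB; last by lia.
  lra.
have bd : (d%:R <= b%:R :> rat)%R by rewrite ler_nat.
have ss0 : forall x, r (s0 (s0 x)) = r x.
  move=> x; apply/eqP; apply/negPn/negP => ne.
  have := bd0 (ex_intro _ x ne).
  have : ((2 <= d%:R :> rat))%R by rewrite (ler_nat _ 2).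
  move: Dle; rewrite natrB; last by lia.
  lra.
have ss1 : forall x, r (s1 (s1 x)) = r x.
  move=> x; apply/eqP; apply/negPn/negP => ne.
  have := bd1 (ex_intro _ x ne).
  have : ((2 <= d%:R :> rat))%R by rewrite (ler_nat _ 2).
  move: Dle; rewrite natrB; last by lia.
  lra.
have Pr : forall x, r ((\prod_(i < k) tau i) x) = r x.
  apply: (big_ind (fun g : {perm 'I_(n.*2)} => forall x, r (g x) = r x)).
  - by move=> x; rewrite perm1.
  - by move=> g h Hg Hh x; rewrite permM Hh Hg.
  - by move=> i _ x; rewrite tfix.
have one : forall x, r (s1 (sinf (s0 x))) = r x.
  move=> x; rewrite -(Pr (s1 (sinf (s0 x)))); congr r.
  have := congr1 (fun g : {perm 'I_(n.*2)} => g x) prod.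
  by rewrite /= !permM perm1 => ->.
have MdN : (M %| n.*2)%N by rewrite NMb dvdn_mulr.
have sinfS : forall x, ((r (sinf x) + 1) %% M = r x)%N.
  move=> x; rewrite /r Hsinf (modn_dvdm _ MdN) modnDml -addnA addn1 prednK //.
  have NM0 : (n.*2 %% M = 0)%N by apply/eqP; rewrite -/(dvdn _ _) MdN.
  by rewrite -modnDmr NM0 addn0.
have A : forall x, r (sinf (s0 x)) = r (s1 x).
  move=> x; have := Hpres _ G1 _ _ (one x); by rewrite ss1.
have A' : forall x, ((r (s1 x) + 1) %% M = r (s0 x))%N.
  by move=> x; rewrite -A sinfS.
have B : forall x, r (s1 (sinf x)) = r (s0 x).
  move=> x; rewrite -(one (s0 x)); apply: (Hpres _ G1); apply: (Hpres _ Ginf).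
  by rewrite ss0.
have C : forall x, ((r (s1 x) + 1) %% M = r (s1 (sinf x)))%N.
  by move=> x; rewrite A' B.
pose phi x := ((r (s1 x) + r x + 2) %% M)%N.
have phiS : forall x, phi (sinf x) = phi x.
  move=> x.
  have e1 : phi (sinf x) = (((r (s1 x) + 1) + (r (sinf x) + 2)) %% M)%N.
    rewrite /phi -addnA; apply: modD_congr => //; by rewrite -C modn_mod.
  have e2 : phi x = (((r (s1 x) + 1) + (r (sinf x) + 2)) %% M)%N.
    rewrite /phi addnAC arith1.
    apply: modD_congr => //; by rewrite sinfS modn_mod.
  by rewrite e1 e2.
have pN : ((n.*2).-1 < n.*2)%N by rewrite prednK.
pose p : 'I_(n.*2) := Ordinal pN.
have rp : r p = M.-1.
  have NM0 : (n.*2 %% M = 0)%N by apply/eqP; rewrite -/(dvdn _ _) MdN.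
  have : ((n.*2).-1 %% M == M.-1 %% M)%N.
    by rewrite -(eqn_modDr 1) !addn1 !prednK // modnn NM0.
  by rewrite /r /= (modn_small (_ : M.-1 < M)%N) ?prednK // => /eqP.
have phip : phi p = 0%N.
  rewrite /phi (proj1 (Hfix p erefl)) rp -addnA addn2 prednK // -addSnnS prednK //.
  by rewrite addnn -muln2 mulnC modnMl.
have phi0 : forall x, phi x = 0%N.
  move=> x; have : x \in porbit sinf p.
    have hp : porbit sinf p = porbit sinf x0 by apply/eqP; rewrite eq_porbit_mem cyc inE.
    by rewrite hp cyc inE.
  move=> /porbitP [i ->]; elim: i => [|i IH]; first by rewrite expg0 perm1.
  by rewrite expgSr permM phiS.
have psi0 : forall x, ((r (s0 x) + r x + 1) %% M = 0)%N.
  move=> x; rewrite -addnA (@modD_congr _ (r (s1 x) + 1) _ (r x + 1)) //.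
    rewrite addnACA; exact: phi0 x.
  by rewrite -A' modn_mod.
exact: (finish m0 MN pres sinfS phi0 psi0 tfix).
Qed.
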